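(* Consider six spin-$\frac12$ particles with Hilbert space $(\mathbb{C}^2)^{\otimes 6}$ and standard product basis. For a pair of spins $i\neq j$ let $P_{ij}$ be the operator swapping spins $i$ and $j$, and for $\alpha\in\mathbb{R}$ let $\mathrm{SWAP}_{ij}^{\alpha}=\frac{1+P_{ij}}{2}+e^{i\pi\alpha}\frac{1-P_{ij}}{2}$. For pairs $(i_1,j_1),\ldots,(i_n,j_n)$ and $\alpha_1,\ldots,\alpha_n\in\mathbb{R}$ let $$U(\alpha_1,\ldots,\alpha_n)=\mathrm{SWAP}_{i_nj_n}^{\alpha_n}\cdots\mathrm{SWAP}_{i_1j_1}^{\alpha_1}.$$ For $s\in\{0,1\}$ let $e^{(s)}_1,\ldots,e^{(s)}_4$ be the four logical two-qubit basis states lying in the total-spin-$s$ subspace (these are fixed vectors with real coefficients in the standard product basis), write $U^{(s)}_{ab}=\langle e^{(s)}_a|U|e^{(s)}_b\rangle$, and define $$d_{\rm FW}(U)=\Big[2-\tfrac14\big|U^{(0)}_{11}+U^{(0)}_{22}+U^{(0)}_{34}+U^{(0)}_{43}\big|-\tfrac14\big|U^{(1)}_{11}+U^{(1)}_{22}+U^{(1)}_{34}+U^{(1)}_{43}\big|\Big]^{1/2}.$$ Then for all $\alpha_1,\ldots,\alpha_n$, $$d_{\rm FW}(U(\alpha_1,\ldots,\alpha_n))=d_{\rm FW}(U(2-\alpha_1,\ldots,2-\alpha_n)).$$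
   Context: Exchange-only encoding: two logical qubits $A$ and $B$ are each encoded in three physical spins (spins $A1,A2,A3$ and $B1,B2,B3$). A single logical qubit in spins labeled 1,2,3 is spanned by $\ket{0}_l=(\ket{010}-\ket{100})/\sqrt2$ and $\ket{1}_l=(2\ket{001}-\ket{010}-\ket{100})/\sqrt6$ (and analogous states in other spin sectors), all having real coefficients; the two-logical-qubit basis states $e^{(s)}_a$ ($a=1,\ldots,4$, ordered as $\ket{00}_l,\ket{01}_l,\ket{10}_l,\ket{11}_l$) within the subspace of total spin $s$ of the six spins are formed from these by real Clebsch–Gordan coupling, so they have real coefficients. $d_{\rm FW}$ measures the distance of $U$ from the logical CNOT gate, allowing independent phases in the total-spin-0 and total-spin-1 sectors. *)

(* Defs.v *)
From HB Require Import structures.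
From mathcomp Require Import all_boot all_order all_algebra all_fingroup.
From mathcomp Require Import complex.
From mathcomp Require Import reals trigo.

Set Implicit Arguments.
Unset Strict Implicit.
Unset Printing Implicit Defensive.

Import Order.TTheory GRing.Theory Num.Theory.
Local Open Scope ring_scope.
Local Open Scope complex_scope.

(* Product basis of six spin-1/2 particles: a basis state is a function
   assigning to each spin 'I_6 a value in 'I_2. *)
Definition spin_config := {ffun 'I_6 -> 'I_2}.
Definition N := #|{: spin_config}|.

Section Defs.
Variable R : realType.
Local Notation C := R[i].

Definition expipi (alpha : R) : C :=
  (cos (pi * alpha))%:C + 'i * (sin (pi * alpha))%:C.

Definition swap_config (i j : 'I_6) (f : spin_config) : spin_config :=
  [ffun k => f (tperm i j k)].

Definition Pswap (i j : 'I_6) : 'M[C]_N :=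
  \matrix_(a, b) ((enum_val a == swap_config i j (enum_val b))%:R : C).

Definition SWAPpow (i j : 'I_6) (alpha : R) : 'M[C]_N :=
  (2%:R^-1 : C) *: (1%:M + Pswap i j)
  + (expipi alpha / 2%:R) *: (1%:M - Pswap i j).

(* U(alpha_1..alpha_n) = SWAP_{i_n j_n}^{alpha_n} ... SWAP_{i_1 j_1}^{alpha_1}
   (indices shifted to 0..n-1). *)
Definition Ugate (n : nat) (pr : 'I_n -> 'I_6 * 'I_6) (alpha : 'I_n -> R)
  : 'M[C]_N :=
  foldl (fun M k => SWAPpow (pr k).1 (pr k).2 (alpha k) *m M) 1%:M (enum 'I_n).

Definition braket (u : 'cV[C]_N) (U : 'M[C]_N) (v : 'cV[C]_N) : C :=
  ((map_mx conjc u)^T *m U *m v) 0 0.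

(* U^{(s)}_{ab} with the logical basis e^{(s)}_a, a = 1..4 encoded as 0..3 *)
Definition Ublock (e : 'I_4 -> 'cV[C]_N) (U : 'M[C]_N) (a b : 'I_4) : C :=
  braket (e a) U (e b).

Definition trCNOT (e : 'I_4 -> 'cV[C]_N) (U : 'M[C]_N) : C :=
  Ublock e U 0 0 + Ublock e U 1 1 + Ublock e U 2 3 + Ublock e U 3 2.

Definition dFW (e0 e1 : 'I_4 -> 'cV[C]_N) (U : 'M[C]_N) : R :=
  Num.sqrt (2 - Normc.normc (trCNOT e0 U) / 4%:R - Normc.normc (trCNOT e1 U) / 4%:R).

Definition real_vec (v : 'cV[C]_N) : Prop := forall k, Im (v k 0) = 0.

End Defs.

(* Main.v *)
Require Import Defs.
From HB Require Import structures.
From mathcomp Require Import all_boot all_order all_algebra all_fingroup.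
From mathcomp Require Import complex.
From mathcomp Require Import reals trigo.
Import Order.TTheory GRing.Theory Num.Theory.
Local Open Scope ring_scope.
Local Open Scope complex_scope.

Section Aux.
Variable R : realType.
Local Notation C := R[i].

Lemma expipi_conj (a : R) : expipi (2 - a) = conjc (expipi a).
Proof.
rewrite /expipi mulrBr mulr_natr cosB sinB cos2pi sin2pi.
rewrite !mul1r !mul0r addr0 sub0r /=.
apply/eqP; rewrite eq_complex /= ?mul0r ?mul1r ?mulr0 ?subr0 ?add0r ?addr0 ?oppr0.
by rewrite !eqxx.
Qed.

Lemma Pswap_conj (i j : 'I_6) : map_mx conjc (Pswap R i j) = Pswap R i j.
Proof.
apply/matrixP => a b; rewrite !mxE rmorph_nat.
by [].
Qed.

Lemma SWAPpow_conj (i j : 'I_6) (a : R) :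
  SWAPpow i j (2 - a) = map_mx conjc (SWAPpow i j a).
Proof.
rewrite /SWAPpow map_mxD !map_mxZ map_mxD map_mxB Pswap_conj map_mx1.
by rewrite rmorphM rmorphV ?unitfE ?pnatr_eq0 // rmorph_nat expipi_conj.
Qed.

Lemma Ugate_conj n (pr : 'I_n -> 'I_6 * 'I_6) (alpha : 'I_n -> R) :
  Ugate pr (fun k => 2 - alpha k) = map_mx conjc (Ugate pr alpha).
Proof.
rewrite /Ugate.
suff H : forall s (M : 'M[C]_N), foldl (fun M k => SWAPpow (pr k).1 (pr k).2 (2 - alpha k) *m M)
   (map_mx conjc M) s = map_mx conjc (foldl (fun M k => SWAPpow (pr k).1 (pr k).2 (alpha k) *m M) M s).
  by rewrite -H map_mx1.
elim=> [|k s IH] M //=.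
by rewrite -IH map_mxM SWAPpow_conj.
Qed.

Lemma real_conj (v : 'cV[C]_N) : real_vec v -> map_mx conjc v = v.
Proof.
move=> hv; apply/matrixP => k l; rewrite mxE (ord1 l).
move: (hv k); case: (v k 0) => x y /= Hy.
move: Hy; rewrite -complexIm /= => -[->]; by rewrite oppr0.
Qed.

Lemma braket_conj (u v : 'cV[C]_N) (U : 'M[C]_N) :
  real_vec u -> real_vec v ->
  braket u (map_mx conjc U) v = conjc (braket u U v).
Proof.
move=> hu hv; rewrite /braket !real_conj //.
have E : forall A : 'M[C]_1, conjc (A 0 0) = (map_mx conjc A) 0 0 by move=> A; rewrite mxE.
rewrite E.
by rewrite !map_mxM -map_trmx !real_conj.
Qed.

Lemma normc_conj (z : C) : Normc.normc (conjc z) = Normc.normc z.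
Proof. by case: z => x y /=; rewrite sqrrN. Qed.

End Aux.

Theorem mainTheorem3 (R : realType) (e0 e1 : 'I_4 -> 'cV[R[i]]_N)
  (he0 : forall a, real_vec (e0 a)) (he1 : forall a, real_vec (e1 a))
  (n : nat) (pr : 'I_n -> 'I_6 * 'I_6) (hpr : forall k, (pr k).1 != (pr k).2)
  (alpha : 'I_n -> R) :
  dFW e0 e1 (Ugate pr alpha) = dFW e0 e1 (Ugate pr (fun k => 2 - alpha k)).
Proof.
rewrite Ugate_conj /dFW.
have H : forall e : 'I_4 -> 'cV[R[i]]_N, (forall a, real_vec (e a)) ->
  trCNOT e (map_mx conjc (Ugate pr alpha)) = conjc (trCNOT e (Ugate pr alpha)).
  move=> e he; rewrite /trCNOT /Ublock !braket_conj //.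
  by rewrite !rmorphD.
by rewrite (H _ he0) (H _ he1) !normc_conj.
Qed.
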